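(* Assume $\sigma_-<1/2$ and let $\rho=1-\frac{\sigma_-}{1-\sigma_-}$ and $C=\frac{2}{\rho(1-\rho)^3}$. Let $\theta\in\Theta$ with $K^\theta\ge2$ and, for a probability measure $\mu$ on $[K^\theta]$, consider under $\theta$ the process $(X_t,Y_t)_{t\ge0}$ where $X_0\sim\mu$, $(X_t)_{t\ge0}$ is a Markov chain with transition matrix $Q^\theta$, and conditionally on $(X_t)$ the $Y_t$ are independent with densities $y\mapsto\gamma^\theta_{X_t}(y-T^\theta_{X_t}(t))$. Then for all $t\ge1$, all probability measures $\mu,\nu$ on $[K^\theta]$, all $x\in[K^\theta]$ and all $y_0^t\in\mathbb R^{t+1}$, $$\big|\log p^\theta(y_t\mid y_0^{t-1},X_t\ne x,X_0\sim\mu)-\log p^\theta(y_t\mid y_0^{t-1},X_t\ne x,X_0\sim\nu)\big|\le C\rho^t,$$ where $p^\theta(y_t\mid y_0^{t-1},X_t\ne x,X_0\sim\mu)$ is the conditional density of $Y_t$ at $y_t$ given $Y_0^{t-1}=y_0^{t-1}$ and $X_t\ne x$ in this process.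
   Context: Fix integers $K\ge1$, $d\ge1$, $\sigma_-\in(0,1)$; $[K']=\{1,\dots,K'\}$; $\Delta_{K'}$ = probability vectors on $[K']$; $\Sigma^{\sigma_-}_{K'}$ = $K'\times K'$ stochastic matrices with all entries $\ge\sigma_-$; $\mathbb R_d[X]$ = real polynomials of degree $\le d$ on $\mathbb R_+$; $\Gamma$ a set of probability densities on $\mathbb R$. $\Theta=\bigcup_{K'=1}^K\{[K']\}\times\Delta_{K'}\times\Sigma^{\sigma_-}_{K'}\times\Gamma^{K'}\times(\mathbb R_d[X])^{K'}$, elements $\theta=(K^\theta,\pi^\theta,Q^\theta,\gamma^\theta,T^\theta)$. *)

(* Defs.v *)
From HB Require Import structures.
From mathcomp Require Import all_boot all_order all_algebra.
From mathcomp Require Import all_classical all_reals all_analysis.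
Set Implicit Arguments. Unset Strict Implicit. Unset Printing Implicit Defensive.
Import Order.TTheory GRing.Theory Num.Theory.
Local Open Scope ring_scope.

Section HMM.
Variable R : realType.

Definition prob_vec (n : nat) (p : 'I_n -> R) : Prop :=
  (forall i, 0 <= p i) /\ \sum_(i < n) p i = 1.

Definition stoch_ge (n : nat) (s : R) (Q : 'M[R]_n) : Prop :=
  (forall i j, s <= Q i j) /\ (forall i, \sum_(j < n) Q i j = 1).

Definition prob_density (f : R -> R) : Prop :=
  (forall y, 0 <= f y) /\ measurable_fun setT f /\
  (\int[@lebesgue_measure R]_y (f y)%:E = 1)%E.

Definition poly_le (d : nat) (p : {poly R}) : Prop := (size p <= d.+1)%N.

(* emission density of Y_s given X_s = k :  y |-> gamma_k (y - T_k(s)) *)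
Definition emis (n : nat) (gam : 'I_n -> R -> R) (T : 'I_n -> {poly R})
  (k : 'I_n) (s : nat) (y : R) : R := gam k (y - (T k).[s%:R]).

(* forward quantity: joint density of (Y_0^s = y_0^s, X_s = k) when X_0 ~ mu *)
Fixpoint fwd (n : nat) (mu : 'I_n -> R) (Q : 'M[R]_n) (gam : 'I_n -> R -> R)
  (T : 'I_n -> {poly R}) (y : nat -> R) (s : nat) (k : 'I_n) : R :=
  match s with
  | 0 => mu k * emis gam T k 0 (y 0%N)
  | s'.+1 => (\sum_(j < n) fwd mu Q gam T y s' j * Q j k) * emis gam T k s'.+1 (y s'.+1)
  end.

(* joint density of (Y_0^{t-1} = y_0^{t-1}, X_t <> x), t >= 1 *)
Definition joint_prev (n : nat) (mu : 'I_n -> R) (Q : 'M[R]_n) (gam : 'I_n -> R -> R)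
  (T : 'I_n -> {poly R}) (y : nat -> R) (t : nat) (x : 'I_n) : R :=
  \sum_(k < n | k != x) \sum_(j < n) fwd mu Q gam T y t.-1 j * Q j k.

(* joint density of (Y_0^t = y_0^t, X_t <> x) *)
Definition joint_cur (n : nat) (mu : 'I_n -> R) (Q : 'M[R]_n) (gam : 'I_n -> R -> R)
  (T : 'I_n -> {poly R}) (y : nat -> R) (t : nat) (x : 'I_n) : R :=
  \sum_(k < n | k != x) fwd mu Q gam T y t k.

(* p(y_t | y_0^{t-1}, X_t <> x, X_0 ~ mu) *)
Definition cond_dens (n : nat) (mu : 'I_n -> R) (Q : 'M[R]_n) (gam : 'I_n -> R -> R)
  (T : 'I_n -> {poly R}) (y : nat -> R) (t : nat) (x : 'I_n) : R :=
  joint_cur mu Q gam T y t x / joint_prev mu Q gam T y t x.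

End HMM.

(* Main.v *)
Require Import Defs.
From HB Require Import structures.
From mathcomp Require Import all_boot all_order all_algebra.
From mathcomp Require Import all_classical all_reals all_analysis.
From mathcomp Require Import ring lra.
Import Order.TTheory GRing.Theory Num.Theory.
Local Open Scope ring_scope.

Section Aux.
Variable R : realType.
Variable n : nat.
Variable Q : 'M[R]_n.
Variable eps : R.
Hypothesis Q0 : forall i j, 0 <= Q i j.
Hypothesis Qe : forall j j' k, eps * Q j' k <= Q j k.
Hypothesis eps0 : 0 <= eps.

Definition pr (u : 'I_n -> R) (k : 'I_n) := \sum_(j < n) u j * Q j k.

Lemma L1 (a v : 'I_n -> R) k : (forall i, 0 <= a i) -> (forall i, 0 <= v i) ->
  eps * (\sum_i a i) * pr v k <= (\sum_i v i) * pr a k.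
Proof.
move=> a0 v0; rewrite /pr.
have -> : eps * (\sum_i a i) * (\sum_j v j * Q j k) =
  \sum_i \sum_j v i * (a j * (eps * Q i k)).
  rewrite mulrC big_distrl /=. apply eq_bigr => i _.
  idtac.
  rewrite mulrA big_distrr /=; apply: eq_bigr => j _; ring.
rewrite big_distrl /=; apply: ler_sum => i _; rewrite big_distrr /=.
apply: ler_sum => j _.
by rewrite ler_wpM2l // ler_wpM2l // Qe.
Qed.

Lemma pr_ge0 u k : (forall i, 0 <= u i) -> 0 <= pr u k.
Proof. by move=> u0; apply: sumr_ge0 => i _; rewrite mulr_ge0. Qed.

Definition inv (u v : 'I_n -> R) (d : R) := exists m M, 0 < m /\
  (forall k, m * v k <= u k /\ u k <= M * v k) /\ M - m <= d * m.

Hypothesis eps1 : eps <= 1.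

Lemma prB (u v : 'I_n -> R) c k : pr (fun i => u i - c * v i) k = pr u k - c * pr v k.
Proof.
rewrite /pr mulr_sumr -sumrB; apply: eq_bigr => i _; ring.
Qed.

Lemma prB' (u v : 'I_n -> R) c k : pr (fun i => c * v i - u i) k = c * pr v k - pr u k.
Proof.
rewrite /pr mulr_sumr -sumrB; apply: eq_bigr => i _; ring.
Qed.

Lemma L2 u v d : (forall i, 0 <= u i) -> (forall i, 0 <= v i) -> 0 <= d ->
  inv u v d -> inv (pr u) (pr v) ((1 - eps) * d).
Proof.
move=> u0 v0 d0 [m [M [m0 [huv hd]]]].
have pr0 : forall w, (forall i, w i = 0) -> forall k, pr w k = 0.
  by move=> w hw k; rewrite /pr big1 // => i _; rewrite hw mul0r.
have [sv0|svp] := eqVneq (\sum_i v i) 0.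
  have v00 : forall i, v i = 0.
    by move=> i; apply: (psumr_eq0P _ sv0) => // j _; exact: v0.
  have u00 : forall i, u i = 0.
    move=> i; have [h1 h2] := huv i.
    rewrite v00 in h1 h2; lra.
  exists m, m; split => //; split.
    by move=> k; rewrite !pr0 // mulr0 lexx.
  rewrite subrr; apply: mulr_ge0; last exact: ltW.
  by apply: mulr_ge0 => //; rewrite subr_ge0.
set sv := \sum_i v i in svp *.
set su := \sum_i u i.
have sv0 : 0 < sv by rewrite lt0r svp sumr_ge0.
have hsu1 : m * sv <= su.
  by rewrite /sv mulr_sumr; apply: ler_sum => i _; case: (huv i).
have hsu2 : su <= M * sv.
  by rewrite /sv mulr_sumr; apply: ler_sum => i _; case: (huv i).
set r := su / sv.
have hr : r * sv = su by rewrite /r mulfVK // gt_eqF.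
have hrm : m <= r by rewrite /r ler_pdivlMr.
have hrM : r <= M by rewrite /r ler_pdivrMr.
exists (m + eps * (r - m)), (M - eps * (M - r)); split.
  have : 0 <= eps * (r - m) by rewrite mulr_ge0 // subr_ge0.
  lra.
split.
  move=> k; split.
    have a0 : forall i, 0 <= u i - m * v i by move=> i; rewrite subr_ge0; case: (huv i).
    have := @L1 _ _ k a0 v0; rewrite prB.
    have -> : \sum_i (u i - m * v i) = su - m * sv by rewrite sumrB mulr_sumr.
    move=> H; rewrite -(ler_pM2l sv0).
    have -> : sv * ((m + eps * (r - m)) * pr v k) =
      sv * m * pr v k + eps * (su - m * sv) * pr v k by rewrite -hr; ring.
    apply: (le_trans (lerD (lexx (sv * m * pr v k)) H)); rewrite le_eqVlt; apply/orP; left; apply/eqP; rewrite /sv; ring.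
  have a0 : forall i, 0 <= M * v i - u i by move=> i; rewrite subr_ge0; case: (huv i).
  have := @L1 _ _ k a0 v0; rewrite prB'.
  have -> : \sum_i (M * v i - u i) = M * sv - su by rewrite sumrB mulr_sumr.
  move=> H; rewrite -(ler_pM2l sv0).
  have -> : sv * ((M - eps * (M - r)) * pr v k) =
    sv * M * pr v k - eps * (M * sv - su) * pr v k by rewrite -hr; ring.
  apply: le_trans (lerB (lexx (sv * M * pr v k)) H); rewrite le_eqVlt; apply/orP; left; apply/eqP; rewrite /sv; ring.
have h1 : 0 <= 1 - eps by rewrite subr_ge0.
have : 0 <= eps * (r - m) by rewrite mulr_ge0 // subr_ge0.
have := mulr_ge0 h1 d0.
nra.
Qed.

Lemma L3 u v d (g : 'I_n -> R) : (forall i, 0 <= g i) ->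
  inv u v d -> inv (fun k => u k * g k) (fun k => v k * g k) d.
Proof.
move=> g0 [m [M [m0 [huv hd]]]]; exists m, M; split => //; split => // k.
have [h1 h2] := huv k; rewrite !mulrA; split; exact: ler_wpM2r.
Qed.

Lemma L4 u v : 0 < eps -> (forall i, 0 <= u i) -> (forall i, 0 <= v i) ->
  0 < \sum_i u i -> 0 < \sum_i v i ->
  inv (pr u) (pr v) ((1 - eps ^+ 2) / eps ^+ 2).
Proof.
move=> e0 u0 v0 su0 sv0.
exists (eps * (\sum_i u i) / (\sum_i v i)), ((\sum_i u i) / (eps * \sum_i v i)).
split; first by rewrite !mulr_gt0 // invr_gt0.
split; last first.
  rewrite le_eqVlt; apply/orP; left; apply/eqP.
  field; rewrite ?gt_eqF //.
move=> k; have h1 := @L1 _ _ k u0 v0; have h2 := @L1 _ _ k v0 u0; split.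
  by rewrite mulrAC ler_pdivrMr // (mulrC (pr u k)).
rewrite mulrAC (ler_pdivlMr _ _ (mulr_gt0 e0 sv0)).
nra.
Qed.
End Aux.
Arguments L1 {R n Q eps}. Arguments L2 {R n Q eps}. Arguments L3 {R n u v d}.
Arguments L4 {R n Q eps}. Arguments pr {R n}. Arguments inv {R n}.

Lemma fwd_ge0 (R : realType) n (mu : 'I_n -> R) (Q : 'M[R]_n) gam T y :
  (forall i, 0 <= mu i) -> (forall i j, 0 <= Q i j) -> (forall k z, 0 <= gam k z) ->
  forall s k, 0 <= fwd mu Q gam T y s k.
Proof.
move=> mu0 Q0 g0; elim=> [|s IH] k /=; rewrite /emis.
  by rewrite mulr_ge0.
by rewrite mulr_ge0 // sumr_ge0 // => i _; rewrite mulr_ge0.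
Qed.
Arguments fwd_ge0 {R n mu Q gam T y}.

Lemma fwd_zero (R : realType) n (mu : 'I_n -> R) (Q : 'M[R]_n) gam T y :
  (forall j, fwd mu Q gam T y 0 j = 0) -> forall s j, fwd mu Q gam T y s j = 0.
Proof.
move=> h0; elim=> [|s IH] j; first exact: h0.
by rewrite /= big1 ?mul0r // => i _; rewrite IH mul0r.
Qed.
Arguments fwd_zero {R n mu Q gam T y}.

Lemma sum0_pos (R : realType) n (mu : 'I_n -> R) (Q : 'M[R]_n) gam T y t x :
  (forall i, 0 <= mu i) -> (forall i j, 0 <= Q i j) -> (forall k z, 0 <= gam k z) ->
  0 < joint_prev mu Q gam T y t x -> 0 < \sum_j fwd mu Q gam T y 0 j.
Proof.
move=> mu0 Q0 g0 hj.
rewrite lt0r sumr_ge0 ?andbT; last by move=> i _; apply: fwd_ge0.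
apply/eqP => H0.
have Z0 : forall j, fwd mu Q gam T y 0 j = 0.
  by move=> j; apply: (psumr_eq0P _ H0) => // i _; apply: fwd_ge0.
have Z := fwd_zero Z0.
move: hj; rewrite /joint_prev big1 ?ltxx // => k _.
by rewrite big1 // => j _; rewrite Z mul0r.
Qed.

Arguments sum0_pos {R n mu Q gam T y t x}.

Lemma Lpred (R : realType) n (mu nu : 'I_n -> R) (Q : 'M[R]_n) gam T y (eps : R) :
  (forall i j, 0 <= Q i j) -> (forall j j' k, eps * Q j' k <= Q j k) ->
  0 < eps -> eps <= 1 -> (forall k z, 0 <= gam k z) ->
  (forall i, 0 <= mu i) -> (forall i, 0 <= nu i) ->
  0 < \sum_j fwd mu Q gam T y 0 j -> 0 < \sum_j fwd nu Q gam T y 0 j ->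
  forall s, inv (pr Q (fwd mu Q gam T y s)) (pr Q (fwd nu Q gam T y s))
     ((1 - eps) ^+ s * ((1 - eps ^+ 2) / eps ^+ 2)).
Proof.
move=> Q0 Qe e0 e1 g0 mu0 nu0 pmu pnu.
have d0 : 0 <= (1 - eps ^+ 2) / eps ^+ 2.
  apply: divr_ge0; last by rewrite exprn_ge0 // ltW.
  rewrite subr_ge0 expr2; have := ler_wpM2l (ltW e0) e1; rewrite mulr1 => h.
  exact: le_trans h e1.
elim=> [|s IH].
  rewrite expr0 mul1r; apply: (L4 Qe) => //; exact: fwd_ge0.
rewrite exprS -mulrA.
have h := L3 (fun k => emis gam T k s.+1 (y s.+1)) (fun k => g0 _ _) IH.
apply: (L2 Qe (ltW e0) e1) => //.
- by move=> i; apply: fwd_ge0.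
- by move=> i; apply: fwd_ge0.
- by rewrite mulr_ge0 // exprn_ge0 // subr_ge0.
Qed.

Arguments Lpred {R n mu nu Q gam T y eps}.

Lemma L6 (R : realType) (a b K : R) : 0 < a -> 0 < b -> 0 < K -> a <= K * b ->
  ln a - ln b <= K - 1.
Proof.
move=> a0 b0 K0 h.
rewrite -ln_div ?posrE //.
have : a / b <= K by rewrite ler_pdivrMr.
rewrite -ler_ln ?posrE ?divr_gt0 // => h2; apply: le_trans h2 _.
have E : K = 1 + (K - 1) by ring.
rewrite {1}E; apply: le_ln1Dx; lra.
Qed.

Lemma L5 (R : realType) n (w z g : 'I_n -> R) (x : 'I_n) d :
  (forall k, 0 <= w k) -> (forall k, 0 <= z k) -> (forall k, 0 <= g k) ->
  inv w z d ->
  0 < \sum_(k < n | k != x) w k -> 0 < \sum_(k < n | k != x) z k ->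
  0 < (\sum_(k < n | k != x) w k * g k) / (\sum_(k < n | k != x) w k) ->
  0 < (\sum_(k < n | k != x) z k * g k) / (\sum_(k < n | k != x) z k) ->
  `| ln ((\sum_(k < n | k != x) w k * g k) / (\sum_(k < n | k != x) w k)) -
     ln ((\sum_(k < n | k != x) z k * g k) / (\sum_(k < n | k != x) z k)) | <= d.
Proof.
move=> w0 z0 g0 [m [M [m0 [h hd]]]].
set A := \sum_(k < n | k != x) w k; set A' := \sum_(k < n | k != x) z k.
set B := \sum_(k < n | k != x) w k * g k; set B' := \sum_(k < n | k != x) z k * g k.
move=> A0 A'0 a0 b0.
have hB : B <= M * B'.
  by rewrite /B /B' mulr_sumr; apply: ler_sum => k _; rewrite mulrA ler_wpM2r //; case: (h k).
have hB' : m * B' <= B.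
  by rewrite /B /B' mulr_sumr; apply: ler_sum => k _; rewrite mulrA ler_wpM2r //; case: (h k).
have hA : A <= M * A'.
  by rewrite /A /A' mulr_sumr; apply: ler_sum => k _; case: (h k).
have hA' : m * A' <= A.
  by rewrite /A /A' mulr_sumr; apply: ler_sum => k _; case: (h k).
have B0 : 0 <= B by rewrite /B sumr_ge0 // => k _; rewrite mulr_ge0.
have B'0 : 0 <= B' by rewrite /B' sumr_ge0 // => k _; rewrite mulr_ge0.
have M0 : 0 < M.
  rewrite ltNge; apply/negP => HM.
  have : M * A' <= 0 by rewrite mulr_le0_ge0 // ltW.
  lra.
have K0 : 0 < M / m by rewrite divr_gt0.
have Kd : M / m - 1 <= d.
  have -> : M / m - 1 = (M - m) / m by field; rewrite gt_eqF.
  by rewrite ler_pdivrMr.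
rewrite ler_norml; apply/andP; split.
  rewrite lerNl opprB; apply: le_trans Kd; apply: L6 => //.
  rewrite -subr_ge0.
  have -> : M / m * (B / A) - B' / A' = (B * (M * A') - m * B' * A) / (m * A * A').
    by field; rewrite !gt_eqF.
  apply: divr_ge0; last by rewrite !mulr_ge0 // ltW.
  rewrite subr_ge0; apply: ler_pM => //; [by rewrite mulr_ge0 // ltW | exact: ltW].
apply: le_trans Kd; apply: L6 => //.
rewrite -subr_ge0.
have -> : M / m * (B' / A') - B / A = (M * B' * A - B * (m * A')) / (m * A * A').
  by field; rewrite !gt_eqF.
apply: divr_ge0; last by rewrite !mulr_ge0 // ltW.
rewrite subr_ge0; apply: ler_pM => //; first by rewrite mulr_ge0 // ltW.
Qed.

Arguments L5 {R n w z g} x {d}.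

Theorem lemma15 (R : realType) (K d : nat) (sigm : R)
  (Gamma : set (R -> R))
  (hsig0 : 0 < sigm) (hsig : sigm < 1 / 2)
  (hGamma : forall f, Gamma f -> prob_density f)
  (Kt : nat) (hKt : (2 <= Kt)%N) (hKtK : (Kt <= K)%N)
  (pi : 'I_Kt -> R) (Q : 'M[R]_Kt) (gam : 'I_Kt -> R -> R) (T : 'I_Kt -> {poly R})
  (hpi : prob_vec pi) (hQ : stoch_ge sigm Q)
  (hgam : forall k, Gamma (gam k)) (hT : forall k, poly_le d (T k))
  (t : nat) (ht : (1 <= t)%N) (mu nu : 'I_Kt -> R)
  (hmu : prob_vec mu) (hnu : prob_vec nu) (x : 'I_Kt) (y : nat -> R)
  (hdmu : 0 < joint_prev mu Q gam T y t x) (hdnu : 0 < joint_prev nu Q gam T y t x)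
  (hcmu : 0 < cond_dens mu Q gam T y t x) (hcnu : 0 < cond_dens nu Q gam T y t x) :
  let rho := 1 - sigm / (1 - sigm) in
  let C := 2 / (rho * (1 - rho) ^+ 3) in
  `| ln (cond_dens mu Q gam T y t x) - ln (cond_dens nu Q gam T y t x) | <= C * rho ^+ t.
Proof.
cbv zeta.
set eps := sigm / (1 - sigm).
have s1 : 0 < 1 - sigm by lra.
have e0 : 0 < eps by rewrite divr_gt0.
have e1 : eps < 1 by rewrite /eps ltr_pdivrMr // mul1r; lra.
have Q0' : forall i j, sigm <= Q i j by case: hQ.
have Q0 : forall i j, 0 <= Q i j by move=> i j; apply: le_trans (Q0' i j); exact: ltW.
have g0 : forall k z, 0 <= gam k z by move=> k z; case: (hGamma _ (hgam k)) => H _; exact: H.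
have Qle : forall j k, Q j k <= 1 - sigm.
  move=> j k.
  have h0 : (0 < Kt)%N by apply: leq_trans hKt.
  have h1 : (1 < Kt)%N by [].
  have [k' hk'] : exists k' : 'I_Kt, k' != k.
    exists (if k == Ordinal h0 then Ordinal h1 else Ordinal h0).
    case: (eqVneq k (Ordinal h0)) => [->|hne]; last by rewrite eq_sym.
    by apply/negP => /eqP /(congr1 val).
  have [_ hs] := hQ.
  have := hs j; rewrite (bigD1 k) //= (bigD1 k') //=.
  have : 0 <= \sum_(i < Kt | (i != k) && (i != k')) Q j i by apply: sumr_ge0.
  have := Q0' j k'.
  lra.
have Qe : forall j j' k, eps * Q j' k <= Q j k.
  move=> j j' k; apply: le_trans (Q0' j k).
  have -> : sigm = eps * (1 - sigm) by rewrite /eps mulfVK // gt_eqF.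
  by rewrite ler_wpM2l // ltW.
have mu0 : forall i, 0 <= mu i by case: hmu.
have nu0 : forall i, 0 <= nu i by case: hnu.
have pmu := sum0_pos mu0 Q0 g0 hdmu.
have pnu := sum0_pos nu0 Q0 g0 hdnu.
case: t ht hdmu hdnu hcmu hcnu => // t' _ hdmu hdnu hcmu hcnu.
have I := Lpred Q0 Qe e0 (ltW e1) g0 mu0 nu0 pmu pnu t'.

have := L5 x (fun k => @pr_ge0 _ _ Q Q0 _ k (fun i => fwd_ge0 mu0 Q0 g0 t' i))
  (fun k => @pr_ge0 _ _ Q Q0 _ k (fun i => fwd_ge0 nu0 Q0 g0 t' i))
  (fun k => g0 k (y t'.+1 - (T k).[t'.+1%:R])) I hdmu hdnu hcmu hcnu.
move=> H; apply: le_trans H _.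
have r0 : 0 < 1 - eps by lra.
have -> : 1 - (1 - eps) = eps by ring.
rewrite [(1 - eps) ^+ t'.+1]exprS.
have -> : 2 / ((1 - eps) * eps ^+ 3) * ((1 - eps) * (1 - eps) ^+ t') =
  (1 - eps) ^+ t' * (2 / eps ^+ 3) by field; rewrite ?gt_eqF.
apply: ler_wpM2l; first by rewrite exprn_ge0 // ltW.
rewrite ler_pdivrMr ?exprn_gt0 //.
have -> : 2 / eps ^+ 3 * eps ^+ 2 = 2 / eps by field; rewrite gt_eqF.
have h2 : 2 <= 2 / eps by rewrite ler_pdivlMr //; lra.
have : 0 <= eps ^+ 2 by rewrite exprn_ge0 // ltW.
lra.
Qed.
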